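(* Let $\mathcal M_\bullet=(B,\sigma,\alpha,b_\bullet)$ be a rooted map, let $S$ be (the edge set of) a spanning tree of $G(\mathcal M)$, and let $w$ be the associated double occurrence word. Then $S$ has the Trémaux property if and only if no edge $f$ has both an in-neighbor in $S$ and an out-neighbor in $S$ in $\vec{\Lambda}(w)$; equivalently, if and only if $w$ does not contain (as a subsequence) a pattern $e_1\,f\,e_1\,e_2\,f\,e_2$ with $e_1,e_2\in S$.
   Context: A map is a triple $\mathcal M=(B,\sigma,\alpha)$ with $B$ finite, $\sigma,\alpha\in\mathrm{Sym}(B)$, $\alpha$ a fixed-point-free involution, $\langle\sigma,\alpha\rangle$ transitive on $B$; a rooted map additionally has a root flag $b_\bullet\in B$. Edges are the cycles of $\alpha$; $\underline b=\{b,\alpha(b)\}$. The underlying graph $G(\mathcal M)$ has vertex set the cycles of $\sigma$, edge set the cycles of $\alpha$, $e$ incident to $v$ iff $e\cap v\neq\emptyset$. The tour of a set $F$ of edges is $\tau$ with $\tau(b)=\sigma(\alpha(b))$ if $\underline b\in F$ and $\tau(b)=\sigma(b)$ otherwise; for a spanning tree $S$, its tour $\tau$ is a single cycle on $B$, and the associated double occurrence word is $w=\underline{b_\bullet}\,\underline{\tau(b_\bullet)}\,\underline{\tau^2(b_\bullet)}\cdots\underline{\tau^{|B|-1}(b_\bullet)}$, a word on the alphabet of edges using each edge exactly twice. $\vec\Lambda(w)$ is the directed graph on the letters of $w$ with an arc $e\to f$ whenever $e\,f\,e\,f$ is a subsequence of $w$. $S$ has the Trémaux property if, rooting the tree $S$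 at the vertex (cycle of $\sigma$) containing $b_\bullet$, for every edge of $G(\mathcal M)$ its two end vertices lie on a common path from the root towards a leaf of $S$ (i.e. one is an ancestor of the other). *)

(* Defs.v *)
From mathcomp Require Import all_boot all_fingroup.
Set Implicit Arguments. Unset Strict Implicit. Unset Printing Implicit Defensive.

Section MapDefs.
Variable B : finType.
Implicit Types (s a : {perm B}) (S : {set {set B}}).

Definition is_map s a : Prop :=
  [/\ forall b, a b != b,
      forall b, a (a b) = b
    & forall x y, connect (fun u v => (v == s u) || (v == a u)) x y].

Definition vtx s (b : B) : {set B} := porbit s b.
Definition edge a (b : B) : {set B} := [set b; a b].
Definition edges a : {set {set B}} := [set edge a b | b : B].

Definition sadj s a S : rel {set B} :=
  fun u v => [exists b, [&& edge a b \in S, vtx s b == u & vtx s (a b) == v]].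

(* S is (the edge set of) a spanning tree of G(M): a set of edges of G(M)
   whose spanning subgraph is connected and acyclic (no edge of S lies on a
   cycle of S, i.e. the ends of each edge e of S are disconnected in S - e;
   loops are thereby excluded). *)
Definition spanning_tree s a S : Prop :=
  [/\ S \subset edges a,
      forall b1 b2, connect (sadj s a S) (vtx s b1) (vtx s b2)
    & forall b, edge a b \in S ->
        ~~ connect (sadj s a (S :\ edge a b)) (vtx s b) (vtx s (a b))].

Definition tour s a S (b : B) : B := if edge a b \in S then s (a b) else s b.

Definition dow s a S (b0 : B) : seq {set B} :=
  [seq edge a (iter i (tour s a S) b0) | i <- iota 0 #|B|].

Definition Larc (w : seq {set B}) (e f : {set B}) : bool :=
  subseq [:: e; f; e; f] w.

Definition tremaux s a S (b0 : B) : Prop :=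
  forall b, exists p : seq {set B},
    [/\ path (sadj s a S) (vtx s b0) p,
        uniq (vtx s b0 :: p),
        vtx s b \in vtx s b0 :: p
      & vtx s (a b) \in vtx s b0 :: p].

End MapDefs.

(* Main.v *)
Require Import Defs.
From mathcomp Require Import all_boot all_fingroup.
From mathcomp Require Import zify.
Set Implicit Arguments. Unset Strict Implicit. Unset Printing Implicit Defensive.

Lemma entry_lem (T : Type) (f : T -> T) (P : pred T) u n :
  ~~ P u -> P (iter n f u) ->
  exists2 k, k < n & ~~ P (iter k f u) && P (iter k.+1 f u).
Proof.
move=> Hu; elim: n => [|n IH] /=; first by rewrite (negbTE Hu).
move=> Hn; case Hp: (P (iter n f u)).
  by have [k Hk H] := IH Hp; exists k => //; apply: ltnW.
by exists n => //; rewrite Hp Hn.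
Qed.

Lemma subseq_ex (T : eqType) (x0 : T) x s w k :
  subseq (x :: s) (drop k w) ->
  exists i, [/\ k <= i, i < size w, nth x0 w i = x & subseq s (drop i.+1 w)].
Proof.
have gen : forall w', subseq (x :: s) w' ->
   exists i, [/\ i < size w', nth x0 w' i = x & subseq s (drop i.+1 w')].
  elim=> [//|y w' IH] /=; case: eqP => [->|_] H.
    by exists 0; rewrite drop0.
  by have [i [H1 H2 H3]] := IH H; exists i.+1.
move=> /gen [i [H1 H2 H3]]; exists (k + i); split.
- exact: leq_addr.
- by move: H1; rewrite size_drop; lia.
- by rewrite -nth_drop.
- by move: H3; rewrite drop_drop addnC -addnS.
Qed.

Lemma subseq_mk (T : eqType) (x0 : T) s w k i :
  k <= i -> i < size w -> subseq s (drop i.+1 w) ->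
  subseq (nth x0 w i :: s) (drop k w).
Proof.
move=> Hki Hi Hs.
apply: (@subseq_trans _ (drop i w)).
  by rewrite (drop_nth x0 Hi) /= eqxx.
have -> : drop i w = drop (i - k) (drop k w) by rewrite drop_drop subnK.
exact: drop_subseq.
Qed.

Section Proof14.
Variable B : finType.
Variables (s a : {perm B}) (b0 : B) (S : {set {set B}}).
Hypothesis aK : forall b, a (a b) = b.
Hypothesis Ssub : S \subset edges a.
Hypothesis Sconn : forall b1 b2, connect (sadj s a S) (vtx s b1) (vtx s b2).
Hypothesis Sacyc : forall b, edge a b \in S ->
  ~~ connect (sadj s a (S :\ edge a b)) (vtx s b) (vtx s (a b)).

Local Notation tau := (tour s a S).
Local Notation rt := (vtx s b0).
Definition inD (e v : {set B}) := ~~ connect (sadj s a (S :\ e)) rt v.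

Lemma edgeA y : edge a (a y) = edge a y.
Proof. by rewrite /edge aK; apply/setP => z; rewrite !inE orbC. Qed.

Lemma edge_eq z y : edge a z = edge a y -> z = y \/ z = a y.
Proof.
move=> H; have : z \in edge a z by rewrite !inE eqxx.
by rewrite H !inE => /orP[/eqP|/eqP]; auto.
Qed.

Lemma sadj_sym F : symmetric (sadj s a F).
Proof.
move=> u v; apply/idP/idP => /existsP [b /and3P [Hb Hu Hv]];
  by apply/existsP; exists (a b); rewrite edgeA Hb aK Hu Hv.
Qed.

Lemma vtx_s z : vtx s (s z) = vtx s z.
Proof. by have := porbit_perm s 1 z; rewrite expg1. Qed.

Lemma tau_inj : injective tau.
Proof.
move=> y z; rewrite /tour.
case Hy: (edge a y \in S); case Hz: (edge a z \in S) => /perm_inj H.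
- by rewrite -(aK y) H aK.
- by rewrite -H edgeA Hy in Hz.
- by rewrite H edgeA Hz in Hy.
- exact: H.
Qed.

Lemma VS e u v : sadj s a (S :\ e) u v ->
  connect (sadj s a (S :\ e)) rt u = connect (sadj s a (S :\ e)) rt v.
Proof.
move=> H; apply/idP/idP => Hc; apply: (connect_trans Hc); apply: connect1 => //.
by rewrite sadj_sym.
Qed.

Lemma SP e z : edge a z != e -> inD e (vtx s (tau z)) = inD e (vtx s z).
Proof.
move=> Hne; rewrite /tour; case: ifP => HS; rewrite vtx_s //.
rewrite /inD (@VS e (vtx s z) (vtx s (a z))) //.
by apply/existsP; exists z; rewrite !inE Hne HS !eqxx.
Qed.

Lemma cross e z : inD e (vtx s (tau z)) != inD e (vtx s z) -> edge a z = e.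
Proof.
move=> H; case: (eqVneq (edge a z) e) => [//|/SP Hs].
by rewrite Hs eqxx in H.
Qed.

Lemma rt_nD e : ~~ inD e rt.
Proof. by rewrite /inD connect0. Qed.

Lemma tau_S z : edge a z \in S -> tau z = s (a z).
Proof. by rewrite /tour => ->. Qed.

Lemma acyc y : edge a y \in S -> inD (edge a y) (vtx s y) || inD (edge a y) (vtx s (a y)).
Proof.
move=> HS; rewrite /inD -negb_and; apply/negP => /andP [H1 H2].
have := Sacyc HS; rewrite (connect_trans _ H2) //.
by rewrite (sym_connect_sym (@sadj_sym _)).
Qed.

Lemma A1 y : fconnect tau b0 y -> edge a y \in S -> fconnect tau b0 (a y).
Proof.
move=> Hy HS; set e := edge a y.
case HyD: (inD e (vtx s y)).
  have [k _ /andP [H1 H2]] :=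
    @entry_lem _ tau (fun z => inD e (vtx s z)) b0 (findex tau b0 y) (rt_nD e)
      ltac:(by rewrite iter_findex).
  have /cross : inD e (vtx s (tau (iter k tau b0))) != inD e (vtx s (iter k tau b0)).
    by rewrite /= in H2; rewrite H2 (negbTE H1).
  case/edge_eq => Hk.
    by rewrite Hk HyD in H1.
  by rewrite -Hk; apply: fconnect_iter.
have HaD : inD e (vtx s (a y)) by have := acyc HS; rewrite -/e HyD.
have Hty : inD e (vtx s (tau y)) by rewrite tau_S // vtx_s.
have Hb : fconnect tau b0 (tau y) := connect_trans Hy (fconnect1 tau y).
have Hb' : fconnect tau (tau y) b0 by rewrite fconnect_sym //; apply: tau_inj.
have [k _ /andP [H1 H2]] :=
  @entry_lem _ tau (fun z => ~~ inD e (vtx s z)) (tau y) (findex tau (tau y) b0)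
    ltac:(by rewrite negbK) ltac:(by rewrite iter_findex // rt_nD).
rewrite negbK in H1.
have /cross : inD e (vtx s (tau (iter k tau (tau y)))) != inD e (vtx s (iter k tau (tau y))).
  by rewrite /= in H2; rewrite (negbTE H2) H1.
case/edge_eq => Hk.
  by rewrite Hk HyD in H1.
by rewrite -Hk; apply: (connect_trans Hb); apply: fconnect_iter.
Qed.

Lemma A2 y : fconnect tau b0 y -> fconnect tau b0 (s y).
Proof.
move=> Hy; case HS: (edge a y \in S).
  have -> : s y = tau (a y) by rewrite tau_S ?aK // edgeA.
  exact: connect_trans (A1 Hy HS) (fconnect1 _ _).
have -> : s y = tau y by rewrite /tour HS.
exact: connect_trans Hy (fconnect1 _ _).
Qed.

Lemma A3 y z : fconnect tau b0 y -> z \in vtx s y -> fconnect tau b0 z.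
Proof.
move=> Hy /porbitP [i ->]; rewrite permX.
by elim: i => [//|i IH] /=; apply: A2.
Qed.

Lemma Aall y : fconnect tau b0 y.
Proof.
have := Sconn b0 y; case/connectP => p.
have : forall z, vtx s z = rt -> fconnect tau b0 z.
  move=> z Hz; apply: (A3 (connect0 _ b0)).
  by rewrite -Hz porbit_sym porbit_id.
elim: p rt => [|v p IH] u Hu /=.
  move=> _ Heq; apply: Hu; by rewrite -Heq.
case/andP => /existsP [d /and3P [HS /eqP Hd /eqP Had]] Hp Hl.
apply: (IH v) => // z Hz.
have Hd0 : fconnect tau b0 d by apply: Hu.
apply: (A3 (A1 Hd0 HS)).
by rewrite -eq_porbit_mem; apply/eqP; rewrite /vtx in Hz Had; rewrite Hz Had.
Qed.


Local Notation n := #|B|.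
Definition tt i := iter i tau b0.
Definition pos y := findex tau b0 y.

Lemma order_n : fingraph.order tau b0 = n.
Proof. by rewrite /fingraph.order; apply: eq_card => z; rewrite !inE Aall. Qed.

Lemma pos_lt y : pos y < n.
Proof. by rewrite -order_n; apply: findex_max; apply: Aall. Qed.

Lemma tt_pos y : tt (pos y) = y.
Proof. by rewrite /tt /pos iter_findex //; apply: Aall. Qed.

Lemma pos_tt i : i < n -> pos (tt i) = i.
Proof. by move=> Hi; rewrite /pos /tt findex_iter // order_n. Qed.

Lemma tt_n : tt n = b0.
Proof. by rewrite /tt -order_n iter_order //; apply: tau_inj. Qed.

Lemma tt_inj i j : i < n -> j < n -> tt i = tt j -> i = j.
Proof. by move=> Hi Hj H; rewrite -(pos_tt Hi) -(pos_tt Hj) H. Qed.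

Lemma ttS i : tt i.+1 = tau (tt i).
Proof. by []. Qed.

Lemma interval x : edge a x \in S -> ~~ inD (edge a x) (vtx s x) ->
  inD (edge a x) (vtx s (a x)) ->
  pos x < pos (a x) /\ forall i, i < n ->
    inD (edge a x) (vtx s (tt i)) = (pos x < i <= pos (a x)).
Proof.
move=> HS Hx Hax; set e := edge a x; set px := pos x; set pa := pos (a x).
have Hpx : px < n by apply: pos_lt.
have Hpa : pa < n by apply: pos_lt.
have SPt : forall i, tt i != x -> tt i != a x ->
    inD e (vtx s (tt i.+1)) = inD e (vtx s (tt i)).
  move=> i H1 H2; rewrite ttS SP //; apply/eqP => /edge_eq [] /eqP.
    by rewrite (negbTE H1).
  by rewrite (negbTE H2).
have tx1 : inD e (vtx s (tt px.+1)) by rewrite ttS tt_pos tau_S // vtx_s.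
have ta1 : ~~ inD e (vtx s (tt pa.+1)).
  by rewrite ttS tt_pos tau_S ?edgeA // aK vtx_s.
have HA : forall i, i <= px -> ~~ inD e (vtx s (tt i)).
  elim=> [|i IH] Hi; first by apply: rt_nD.
  rewrite SPt; first by apply: IH; apply: ltnW.
    by apply/eqP => Heq; have := pos_tt (ltn_trans Hi Hpx); rewrite Heq -/px; lia.
  by apply/eqP => Heq; have := IH (ltnW Hi); rewrite Heq Hax.
have HB : forall k, 0 < k -> px + k <= n ->
    (forall j, 0 < j < k -> tt (px + j) != a x) -> inD e (vtx s (tt (px + k))).
  elim=> [//|k IH] _ Hk Hj.
  case: k IH Hk Hj => [|k] IH Hk Hj; first by rewrite addn1.
  have IH' : inD e (vtx s (tt (px + k.+1))).
    apply: IH => //; first by lia.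
    by move=> j /andP [Hj1 Hj2]; apply: Hj; rewrite Hj1 /=; lia.
  rewrite addnS SPt //.
    by apply/eqP => Heq; move: IH'; rewrite Heq (negbTE Hx).
  by apply: Hj; lia.
have Hlt : px < pa.
  rewrite ltnNge; apply/negP => Hle.
  have : inD e (vtx s (tt (px + (n - px)))).
    apply: HB; try lia.
    move=> j /andP [Hj1 Hj2]; apply/eqP => Heq.
    have := pos_tt (i := px + j) ltac:(lia); rewrite Heq -/pa; lia.
  by rewrite subnKC ?(ltnW Hpx) // tt_n (negbTE (rt_nD e)).
have HC : forall k, 0 < k -> pa + k <= n -> ~~ inD e (vtx s (tt (pa + k))).
  elim=> [//|k IH] _ Hk.
  case: k IH Hk => [|k] IH Hk; first by rewrite addn1.
  have IH' := IH isT ltac:(lia).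
  rewrite addnS SPt //.
    apply/eqP => Heq; have := pos_tt (i := pa + k.+1) ltac:(lia).
    by rewrite Heq -/px; lia.
  by apply/eqP => Heq; move: IH'; rewrite Heq Hax.
split => // i Hi.
case: (leqP i px) => [Hip|Hpi].
  by rewrite (negbTE (HA i Hip)); symmetry; apply/negbTE; lia.
case: (leqP i pa) => [Hia|Hai].
  have : inD e (vtx s (tt (px + (i - px)))).
    apply: HB; try lia.
    move=> j /andP [Hj1 Hj2]; apply/eqP => Heq.
    have := pos_tt (i := px + j) ltac:(lia); rewrite Heq -/pa; lia.
  by rewrite subnKC ?(ltnW Hpi) // => ->; rewrite Hpi Hia.
have := HC (i - pa) ltac:(lia) ltac:(lia).
rewrite subnKC ?(ltnW Hai) // => /negbTE ->.
symmetry; apply/negbTE; lia.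
Qed.


Lemma F1 y : edge a y \in S ->
  inD (edge a y) (vtx s y) != inD (edge a y) (vtx s (a y)).
Proof.
move=> HS; set e := edge a y.
have := acyc HS; rewrite -/e.
case Hy: (inD e (vtx s y)); case Hay: (inD e (vtx s (a y))) => //= _.
have [k _ /andP [H1 H2]] :=
  @entry_lem _ tau (fun z => inD e (vtx s z)) b0 (findex tau b0 y) (rt_nD e)
    ltac:(by rewrite iter_findex //; apply: Aall).
have /cross : inD e (vtx s (tau (iter k tau b0))) != inD e (vtx s (iter k tau b0)).
  by rewrite /= in H2; rewrite H2 (negbTE H1).
by case/edge_eq => Hk; move: H1; rewrite Hk ?Hy ?Hay.
Qed.

Lemma rootside e : e \in S ->
  exists x, [/\ edge a x = e, ~~ inD e (vtx s x) & inD e (vtx s (a x))].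
Proof.
move=> He; have := subsetP Ssub e He; case/imsetP => y _ Hey.
have HS : edge a y \in S by rewrite -Hey.
have := F1 HS; rewrite -Hey.
case Hy: (inD e (vtx s y)); case Hay: (inD e (vtx s (a y))) => // _.
  by exists (a y); rewrite edgeA aK Hy Hay -Hey.
by exists y; rewrite Hay Hy.
Qed.

Lemma occ2 i j : i < n -> j < n -> i != j ->
  edge a (tt i) = edge a (tt j) -> tt j = a (tt i).
Proof.
move=> Hi Hj Hij /esym /edge_eq [] // H.
by have := tt_inj Hj Hi H => Heq; rewrite Heq eqxx in Hij.
Qed.

Lemma occ3 i j k : i < n -> j < n -> k < n -> i != j -> i != k -> j != k ->
  edge a (tt i) = edge a (tt j) -> edge a (tt i) = edge a (tt k) -> False.
Proof.
move=> Hi Hj Hk Hij Hik Hjk E1 E2.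
have H1 := occ2 Hi Hj Hij E1; have H2 := occ2 Hi Hk Hik E2.
have := tt_inj Hj Hk (etrans H1 (esym H2)) => Heq.
by rewrite Heq eqxx in Hjk.
Qed.

Lemma treeocc e i1 i2 : e \in S -> i1 < i2 -> i2 < n ->
  edge a (tt i1) = e -> edge a (tt i2) = e ->
  forall j, j < n -> inD e (vtx s (tt j)) = (i1 < j <= i2).
Proof.
move=> He H12 H2n E1 E2.
have Hi1 : i1 < n by apply: ltn_trans H2n.
have Ha := occ2 Hi1 H2n ltac:(by rewrite neq_ltn H12) (etrans E1 (esym E2)).
have HS : edge a (tt i1) \in S by rewrite E1.
have := F1 HS; rewrite E1.
case Hy: (inD e (vtx s (tt i1))); case Hay: (inD e (vtx s (a (tt i1)))) => // _.
  have HS' : edge a (a (tt i1)) \in S by rewrite edgeA.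
  have [Hlt _] := @interval (a (tt i1)) HS' ltac:(by rewrite edgeA E1 Hay)
     ltac:(by rewrite aK edgeA E1 Hy).
  by move: Hlt; rewrite aK -Ha !pos_tt //; lia.
have [_ Hint] := @interval (tt i1) HS ltac:(by rewrite E1 Hy) ltac:(by rewrite E1 Hay).
by move=> j Hj; rewrite -E1 Hint // -Ha !pos_tt.
Qed.

Lemma nth_w i : i < n -> nth set0 (dow s a S b0) i = edge a (tt i).
Proof. by move=> Hi; rewrite /dow (nth_map 0) ?size_iota // nth_iota. Qed.

Lemma size_w : size (dow s a S b0) = n.
Proof. by rewrite /dow size_map size_iota. Qed.

Lemma larc_ex e f : Larc (dow s a S b0) e f ->
  exists i1 j1 i2 j2, [/\ i1 < j1, j1 < i2, i2 < j2, j2 < n &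
    [/\ edge a (tt i1) = e, edge a (tt j1) = f, edge a (tt i2) = e &
        edge a (tt j2) = f]].
Proof.
rewrite /Larc -{1}(drop0 (dow s a S b0)).
case/(subseq_ex set0) => i1 []; rewrite size_w => _ H1 E1.
case/(subseq_ex set0) => j1 []; rewrite size_w => Hj1 H2 E2.
case/(subseq_ex set0) => i2 []; rewrite size_w => Hi2 H3 E3.
case/(subseq_ex set0) => j2 []; rewrite size_w => Hj2 H4 E4 _.
exists i1, j1, i2, j2; split => //.
by rewrite -nth_w // -nth_w // -nth_w // -nth_w.
Qed.

Lemma larc_mk e f i1 j1 i2 j2 : i1 < j1 -> j1 < i2 -> i2 < j2 -> j2 < n ->
  edge a (tt i1) = e -> edge a (tt j1) = f -> edge a (tt i2) = e ->
  edge a (tt j2) = f -> Larc (dow s a S b0) e f.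
Proof.
move=> H1 H2 H3 H4 E1 E2 E3 E4.
rewrite /Larc.
have -> : [:: e; f; e; f] = [:: nth set0 (dow s a S b0) i1; nth set0 (dow s a S b0) j1;
   nth set0 (dow s a S b0) i2; nth set0 (dow s a S b0) j2].
  by rewrite !nth_w ?E1 ?E2 ?E3 ?E4 //; lia.
rewrite -[X in subseq _ X]drop0.
apply: subseq_mk; rewrite ?size_w //; first by lia.
apply: subseq_mk; rewrite ?size_w //; first by lia.
apply: subseq_mk; rewrite ?size_w //; first by lia.
by apply: subseq_mk; rewrite ?size_w ?sub0seq //; lia.
Qed.


Section Side.
Variables (x : B) (e : {set B}).
Hypotheses (Hxe : edge a x = e) (HS : e \in S) (Hx : ~~ inD e (vtx s x))
  (Hax : inD e (vtx s (a x))).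

Lemma crossV u v : sadj s a S u v -> ~~ inD e u -> inD e v -> u = vtx s x.
Proof.
case/existsP => d /and3P [Hd /eqP Hu /eqP Hv] Hu' Hv'.
case: (eqVneq (edge a d) e) => [Hde|Hne].
  rewrite -Hxe in Hde; case/edge_eq: Hde => Hdx; first by rewrite -Hu Hdx.
  by move: Hu'; rewrite -Hu Hdx Hax.
have Hadj : sadj s a (S :\ e) u v.
  by apply/existsP; exists d; rewrite !inE Hne Hd Hu Hv !eqxx.
by move: Hu' Hv'; rewrite /inD (VS Hadj) negbK => ->.
Qed.

Lemma L1 u q : path (sadj s a S) u q -> inD e u -> vtx s x \notin q ->
  all (inD e) q.
Proof.
elim: q u => [//|v q IH] u /= /andP [Huv Hp] Hu.
rewrite inE negb_or => /andP [Hvx Hq].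
have Hv : inD e v.
  case Hv': (inD e v) => //.
  have := @crossV v u ltac:(by rewrite sadj_sym) (negbT Hv') Hu => Heq.
  by rewrite Heq eqxx in Hvx.
by rewrite Hv (IH v).
Qed.

Lemma L2 u q : path (sadj s a S) u q -> uniq (u :: q) -> ~~ inD e u ->
  forall y z, y \in u :: q -> z \in u :: q -> inD e y -> ~~ inD e z ->
  index z (u :: q) < index y (u :: q).
Proof.
elim: q u => [|v q IH] u.
  move=> _ _ Hu y z; rewrite !inE => /eqP -> /eqP -> Hy.
  by rewrite (negbTE Hu) in Hy.
move=> /= /andP [Huv Hp] /andP [Hun Hvq] Hu y z Hy Hz HyD HzD.
have Hyu : u != y by apply/eqP => Heq; rewrite Heq HyD in Hu.
rewrite /= (negbTE Hyu).
case: (eqVneq u z) => [//|Hzu].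
rewrite ltnS.
rewrite inE eq_sym (negbTE Hyu) /= in Hy.
rewrite inE eq_sym (negbTE Hzu) /= in Hz.
case HvD: (inD e v).
  have Hux := crossV Huv Hu HvD.
  have Hall := @L1 v q Hp HvD ltac:(by rewrite -Hux; move: Hun; rewrite inE negb_or => /andP []).
  move: Hz; rewrite inE => /orP [/eqP Hzv|Hzq].
    by rewrite Hzv HvD in HzD.
  by move/allP: Hall => /(_ z Hzq) Hz'; rewrite Hz' in HzD.
by apply: IH => //; rewrite HvD.
Qed.

End Side.

Lemma dir1 f e g : e \in S -> g \in S -> Larc (dow s a S b0) e f ->
  Larc (dow s a S b0) f g -> ~ tremaux s a S b0.
Proof.
move=> He Hg /larc_ex [i1 [j1 [i2 [j2 [H1 H2 H3 H4 [E1 E2 E3 E4]]]]]].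
move=> /larc_ex [k1 [l1 [k2 [l2 [K1 K2 K3 K4 [F1 F2 F3 F4]]]]]].
have Ek1 : k1 = j1 \/ k1 = j2.
  case: (eqVneq k1 j1) => [->|N1]; first by left.
  case: (eqVneq k1 j2) => [->|N2]; first by right.
  exfalso; apply: (@occ3 j1 j2 k1); rewrite ?E2 ?E4 ?F1 //; lia.
have Ek2 : k2 = j1 \/ k2 = j2.
  case: (eqVneq k2 j1) => [->|N1]; first by left.
  case: (eqVneq k2 j2) => [->|N2]; first by right.
  exfalso; apply: (@occ3 j1 j2 k2); rewrite ?E2 ?E4 ?F3 //; lia.
have [Ek1' Ek2'] : k1 = j1 /\ k2 = j2 by lia.
subst k1 k2.
have Hi12 : i1 < i2 by lia.
have Hi2n : i2 < n by lia.
have Hl12 : l1 < l2 by lia.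
have Te := treeocc He Hi12 Hi2n E1 E3.
have Tg := treeocc Hg Hl12 K4 F2 F4.
have Da1 : inD e (vtx s (tt j1)) by rewrite Te //; lia.
have Da2 : ~~ inD e (vtx s (tt j2)) by rewrite Te //; lia.
have Dg1 : ~~ inD g (vtx s (tt j1)) by rewrite Tg //; lia.
have Dg2 : inD g (vtx s (tt j2)) by rewrite Tg //; lia.
have Ha : tt j2 = a (tt j1) by apply: occ2; rewrite ?E2 ?E4 //; lia.
move=> /(_ (tt j1)) [p [Hp Hu Hm1 Hm2]].
rewrite -Ha in Hm2.
have [x [Hx1 Hx2 Hx3]] := rootside He.
have [y [Hy1 Hy2 Hy3]] := rootside Hg.
have I1 := L2 Hx1 Hx3 Hp Hu (rt_nD e) Hm1 Hm2 Da1 Da2.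
have I2 := L2 Hy1 Hy3 Hp Hu (rt_nD g) Hm2 Hm1 Dg2 Dg1.
by have := ltn_trans I1 I2; rewrite ltnn.
Qed.


Lemma upath z : exists q, [/\ path (sadj s a S) rt q, uniq (rt :: q) &
  last rt q = vtx s z].
Proof.
have [p Hp Hl] := connectP (Sconn b0 z).
rewrite Hl; case: (shortenP Hp) => p' Hp' Hu _.
by exists p'.
Qed.

Lemma avoid d u p : path (sadj s a S) u p -> vtx s (a d) \notin u :: p ->
  path (sadj s a (S :\ edge a d)) u p.
Proof.
elim: p u => [//|v p IH] u /= /andP [Huv Hp].
rewrite !inE !negb_or => /andP [Hu /andP [Hv Hp']].
rewrite IH ?inE ?negb_or ?Hv ?Hp' // andbT.
case/existsP: Huv => d' /and3P [Hd' /eqP Hu' /eqP Hv'].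
apply/existsP; exists d'; rewrite !inE Hd' Hu' Hv' !eqxx !andbT.
apply/negP => /eqP /edge_eq [Hdd|Hdd].
  by move: Hv; rewrite -Hv' Hdd eqxx.
by move: Hu; rewrite -Hu' Hdd eqxx.
Qed.

Lemma lastedge z q : path (sadj s a S) rt q -> uniq (rt :: q) ->
  last rt q = vtx s z -> vtx s z != rt -> vtx s (a z) \notin rt :: q ->
  exists d, [/\ edge a d \in S, edge a d != edge a z,
     vtx s (a d) = vtx s z & inD (edge a d) (vtx s z)].
Proof.
case/lastP: q => [|q v]; first by move=> _ _ /= ->; rewrite eqxx.
rewrite rcons_path last_rcons => /andP [Hp Hadj] Hu Hv Hz Haz.
rewrite -rcons_cons rcons_uniq in Hu; case/andP: Hu => Hvq Hu.
case/existsP: Hadj => d /and3P [HS /eqP Hd /eqP Had].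
rewrite Hv in Had Hvq.
exists d; split => //.
- apply/eqP => /edge_eq [Hdz|Hdz].
    by move: Hvq; rewrite -Hdz Hd mem_last.
  move: Haz; rewrite -Hdz Hd.
  by rewrite -rcons_cons mem_rcons inE mem_last orbT.
- rewrite /inD; apply/negP => Hc.
  have Hp' := @avoid d _ _ Hp ltac:(by rewrite Had).
  have Hw : connect (sadj s a (S :\ edge a d)) rt (last rt q).
    by apply/connectP; exists q.
  have := Sacyc HS; rewrite Hd Had.
  rewrite (connect_trans _ Hc) //.
  by rewrite (sym_connect_sym (@sadj_sym _)).
Qed.


Definition Pat1 := exists f : {set B},
  (exists2 e, e \in S & Larc (dow s a S b0) e f) /\
  (exists2 g, g \in S & Larc (dow s a S b0) f g).

Lemma dir2 c : pos c < pos (a c) -> ~ Pat1 ->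
  exists p, [/\ path (sadj s a S) rt p, uniq (rt :: p),
     vtx s c \in rt :: p & vtx s (a c) \in rt :: p].
Proof.
move=> Hpos Hno.
have [q1 [P1 U1 L1']] := upath c.
have [q2 [P2 U2 L2']] := upath (a c).
case H21: (vtx s (a c) \in rt :: q1).
  by exists q1; split => //; rewrite -L1' mem_last.
case H12: (vtx s c \in rt :: q2).
  by exists q2; split => //; rewrite -L2' mem_last.
exfalso; apply: Hno.
have Hc_rt : vtx s c != rt by apply/eqP => E; move: H12; rewrite E mem_head.
have Hac_rt : vtx s (a c) != rt by apply/eqP => E; move: H21; rewrite E mem_head.
have [d1 [S1 N1 A1' D1]] := lastedge P1 U1 L1' Hc_rt (negbT H21).
have [d2 [S2 N2 A2' D2]] := @lastedge (a c) q2 P2 U2 L2' Hac_rt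
   ltac:(by rewrite aK H12).
have ND1 : ~~ inD (edge a d1) (vtx s (a c)).
  rewrite /inD negbK; apply/connectP; exists q2 => //.
  by apply: avoid; rewrite // A1' H12.
have ND2 : ~~ inD (edge a d2) (vtx s c).
  rewrite /inD negbK; apply/connectP; exists q1; last by rewrite L1'.
  by apply: avoid; rewrite // A2' H21.
rewrite edgeA in N2.
have T1 : tt (pos c) = c := tt_pos c.
have T2 : tt (pos (a c)) = a c := tt_pos (a c).
have Hj2 : pos (a c) < n := pos_lt (a c).
have [x [Hx1 Hx2 Hx3]] := rootside S1.
have [Hltx Hintx] := @interval x ltac:(by rewrite Hx1) ltac:(by rewrite Hx1)
   ltac:(by rewrite Hx1).
have [y [Hy1 Hy2 Hy3]] := rootside S2.
have [Hlty Hinty] := @interval y ltac:(by rewrite Hy1) ltac:(by rewrite Hy1)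
   ltac:(by rewrite Hy1).
rewrite Hx1 in Hintx; rewrite Hy1 in Hinty.
have I1 := Hintx (pos c) (pos_lt c); rewrite T1 D1 in I1.
have I2 := Hintx (pos (a c)) Hj2; rewrite T2 (negbTE ND1) in I2.
have I3 := Hinty (pos (a c)) Hj2; rewrite T2 D2 in I3.
have I4 := Hinty (pos c) (pos_lt c); rewrite T1 (negbTE ND2) in I4.
have Nx : pos c != pos (a x).
  apply/eqP => E; have : tt (pos c) = tt (pos (a x)) by rewrite E.
  rewrite T1 tt_pos => Ec; move: N1; rewrite -Hx1 Ec edgeA eqxx //.
have Ny1 : pos (a c) != pos (a y).
  apply/eqP => E; have : tt (pos (a c)) = tt (pos (a y)) by rewrite E.
  rewrite T2 tt_pos => Ec; move: N2; rewrite -Hy1 -(edgeA c) Ec edgeA eqxx //.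
have Ny2 : pos c != pos y.
  apply/eqP => E; have : tt (pos c) = tt (pos y) by rewrite E.
  rewrite T1 tt_pos => Ec; move: N2; rewrite -Hy1 Ec eqxx //.
have Hpx := pos_lt x; have Hpax := pos_lt (a x).
have Hpy := pos_lt y; have Hpay := pos_lt (a y).
move/esym: I1 => I1; move/esym: I2 => I2; move/esym: I3 => I3; move/esym: I4 => I4.
have [O1 O2 O3 O4] : [/\ pos x < pos c, pos c < pos (a x), pos (a x) < pos (a c) & pos (a c) < n].
  by clear -I1 I2 Nx Hpos Hj2; split; lia.
have [O5 O6 O7 O8] : [/\ pos c < pos y, pos y < pos (a c), pos (a c) < pos (a y) & pos (a y) < n].
  by clear -I3 I4 Ny1 Ny2 Hpos Hpay; split; lia.
exists (edge a c); split.
  exists (edge a d1) => //.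
  apply: (@larc_mk _ _ (pos x) (pos c) (pos (a x)) (pos (a c))) => //.
  - by rewrite tt_pos.
  - by rewrite T1.
  - by rewrite tt_pos edgeA.
  - by rewrite T2 edgeA.
exists (edge a d2) => //.
apply: (@larc_mk _ _ (pos c) (pos y) (pos (a c)) (pos (a y))) => //.
- by rewrite T1.
- by rewrite tt_pos.
- by rewrite T2 edgeA.
- by rewrite tt_pos edgeA.
Qed.


Lemma sc1 (T : eqType) (x : T) s1 s2 : subseq s1 s2 -> subseq (x :: s1) (x :: s2).
Proof. by rewrite /= eqxx. Qed.

Lemma sc2 (T : eqType) (y : T) s1 s2 : subseq s1 s2 -> subseq s1 (y :: s2).
Proof. by move=> H; apply: subseq_trans H (subseq_cons _ _). Qed.

Lemma pat21 e1 e2 f : e1 \in S -> e2 \in S ->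
  subseq [:: e1; f; e1; e2; f; e2] (dow s a S b0) -> Pat1.
Proof.
move=> H1 H2 Hs; exists f; split.
  exists e1 => //; apply: subseq_trans Hs.
  by do 3! apply: sc1; apply: sc2; apply: sc1; apply: sub0seq.
exists e2 => //; apply: subseq_trans Hs.
apply: sc2; apply: sc1; apply: sc2; do 3! apply: sc1; apply: sub0seq.
Qed.

Lemma pat12 : Pat1 -> exists e1 e2 f : {set B},
  [/\ e1 \in S, e2 \in S & subseq [:: e1; f; e1; e2; f; e2] (dow s a S b0)].
Proof.
case=> f [[e He Hef] [g Hg Hfg]].
move: Hef Hfg => /larc_ex [i1 [j1 [i2 [j2 [H1 H2 H3 H4 [E1 E2 E3 E4]]]]]].
move=> /larc_ex [k1 [l1 [k2 [l2 [K1 K2 K3 K4 [F1 F2 F3 F4]]]]]].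
have Ek1 : k1 = j1 \/ k1 = j2.
  case: (eqVneq k1 j1) => [->|N1]; first by left.
  case: (eqVneq k1 j2) => [->|N2]; first by right.
  exfalso; apply: (@occ3 j1 j2 k1); rewrite ?E2 ?E4 ?F1 //; lia.
have Ek2 : k2 = j1 \/ k2 = j2.
  case: (eqVneq k2 j1) => [->|N1]; first by left.
  case: (eqVneq k2 j2) => [->|N2]; first by right.
  exfalso; apply: (@occ3 j1 j2 k2); rewrite ?E2 ?E4 ?F3 //; lia.
have [Ek1' Ek2'] : k1 = j1 /\ k2 = j2 by lia.
subst k1 k2.
have Hi12 : i1 < i2 by lia.
have Hi2n : i2 < n by lia.
have Te := treeocc He Hi12 Hi2n E1 E3.
case: (ltnP i2 l1) => Hil.
  exists e, g, f; split => //.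
  have -> : [:: e; f; e; g; f; g] = [:: nth set0 (dow s a S b0) i1;
     nth set0 (dow s a S b0) j1; nth set0 (dow s a S b0) i2;
     nth set0 (dow s a S b0) l1; nth set0 (dow s a S b0) j2;
     nth set0 (dow s a S b0) l2].
    by rewrite !nth_w ?E1 ?E2 ?E3 ?E4 ?F2 ?F4 //; lia.
  rewrite -[X in subseq _ X]drop0.
  do 5! (apply: subseq_mk; rewrite ?size_w //; try by lia).
  by apply: subseq_mk; rewrite ?size_w ?sub0seq //; lia.
exfalso.
have Hgne : g != e.
  apply/eqP => Hge; apply: (@occ3 i1 i2 l2); rewrite ?E1 ?E3 ?F4 ?Hge //; lia.
have Hl1i2 : l1 < i2.
  rewrite ltn_neqAle Hil andbT; apply/eqP => El.
  by move: Hgne; rewrite -F2 El E3 eqxx.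
have D1 : inD e (vtx s (tt l1)) by rewrite Te //; lia.
have D2 : ~~ inD e (vtx s (tt l2)) by rewrite Te //; lia.
have Ha : tt l2 = a (tt l1) by apply: occ2; rewrite ?F2 ?F4 //; lia.
have Hadj : sadj s a (S :\ e) (vtx s (tt l1)) (vtx s (a (tt l1))).
  by apply/existsP; exists (tt l1); rewrite !inE F2 Hgne Hg !eqxx.
by move: D1 D2; rewrite Ha /inD (VS Hadj) => /negbTE ->.
Qed.

End Proof14.

Theorem lemma14 (B : finType) (s a : {perm B}) (b0 : B) (S : {set {set B}}) :
  is_map s a -> spanning_tree s a S ->
  (tremaux s a S b0 <->
     ~ (exists f : {set B},
          (exists2 e, e \in S & Larc (dow s a S b0) e f) /\
          (exists2 g, g \in S & Larc (dow s a S b0) f g)))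
  /\
  (tremaux s a S b0 <->
     ~ (exists e1 e2 f : {set B},
          [/\ e1 \in S, e2 \in S &
              subseq [:: e1; f; e1; e2; f; e2] (dow s a S b0)])).
Proof.
case=> Hfp aK _ [Ssub Sconn Sacyc].
have T1 : tremaux s a S b0 <-> ~ Pat1 s a b0 S.
  split.
    move=> Htr [f [[e He Hef] [g Hg Hfg]]].
    exact: (dir1 aK Ssub Sconn Sacyc He Hg Hef Hfg Htr).
  move=> Hno b.
  have Hne : pos s a b0 S b != pos s a b0 S (a b).
    apply/eqP => E.
    have := tt_pos b0 aK Sconn Sacyc b; rewrite E tt_pos // => Eb.
    by move: (Hfp b); rewrite Eb eqxx.
  case: (ltngtP (pos s a b0 S b) (pos s a b0 S (a b))) => Hc.
  - exact: (dir2 aK Ssub Sconn Sacyc Hc Hno).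
  - have Hc' : pos s a b0 S (a b) < pos s a b0 S (a (a b)) by rewrite aK.
    have [p [P1 P2 P3 P4]] := dir2 aK Ssub Sconn Sacyc Hc' Hno.
    by exists p; split => //; rewrite aK in P4.
  - by rewrite Hc eqxx in Hne.
split; first exact: T1.
rewrite T1; split => H1 H2; apply: H1.
  by case: H2 => e1 [e2 [f [He1 He2 Hs]]]; apply: (pat21 He1 He2 Hs).
exact: (pat12 aK Ssub Sconn Sacyc H2).
Qed.
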